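(* Let $X$ be a Banach space isomorphic to a Hilbert space. Then for every nonempty bounded closed convex $C\subset X$, every $\mathfrak{cm}$-nonexpansive map $T\colon C\to C$ has a fixed point.
   Context: For a bounded convex set $C$, a nonexpansive map $T\colon C\to C$ is $\mathfrak{cm}$-nonexpansive if for all $n\in\mathbb{N}$, $y\in C$ and sequences $(u_i)_{i=1}^\infty\subset C$: $\limsup_{i\to\infty}\sup_{A\subset\{1,\dots,n\}}\|\sum_{k\in A}(Tu_{i+k}-Ty)\|\le\limsup_{i\to\infty}\sup_{A\subset\{1,\dots,n\}}\|\sum_{k\in A}(u_{i+k}-y)\|$, where $\|\cdot\|$ is the norm of $X$. *)

(* Defs.v *)
From HB Require Import structures.
From mathcomp Require Import all_boot all_order all_algebra.
From mathcomp Require Import all_classical all_reals all_analysis.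
Set Implicit Arguments. Unset Strict Implicit. Unset Printing Implicit Defensive.
Import Order.TTheory GRing.Theory Num.Theory.
Import numFieldNormedType.Exports.
Local Open Scope classical_set_scope.
Local Open Scope ring_scope.

(* Real inner product on a normed space H whose norm is induced by it:
   H (complete) with such an inner product is a (real) Hilbert space. *)
Definition inner_product_inducing_norm (R : realType) (H : normedModType R)
    (ip : H -> H -> R) : Prop :=
  [/\ (forall x y, ip x y = ip y x),
      (forall a x y z, ip (a *: x + y) z = a * ip x z + ip y z),
      (forall x, 0 <= ip x x),
      (forall x, ip x x = 0 -> x = 0)
    & (forall x, `|x| = Num.sqrt (ip x x))].

Definition isomorphic_to_Hilbert (R : realType) (X : normedModType R) : Prop :=
  exists (H : completeNormedModType R) (ip : H -> H -> R)
         (f : {linear X -> H}) (g : H -> X),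
    [/\ inner_product_inducing_norm ip,
        cancel f g, cancel g f,
        (exists c : R, forall x, `|f x| <= c * `|x|)
      & (exists c : R, forall h, `|g h| <= c * `|h|)].

Definition convex_subset (R : realType) (X : normedModType R) (C : set X) :=
  forall x y (t : R), C x -> C y -> 0 <= t -> t <= 1 -> C (t *: x + (1 - t) *: y).

Definition bounded_subset (R : realType) (X : normedModType R) (C : set X) :=
  exists M : R, forall x, C x -> `|x| <= M.

Definition maps_into (X : Type) (C : set X) (T : X -> X) :=
  forall x, C x -> C (T x).

Definition nonexpansive_on (R : realType) (X : normedModType R) (C : set X)
    (T : X -> X) :=
  forall x y, C x -> C y -> `|T x - T y| <= `|x - y|.

Definition cm_sup (R : realType) (X : normedModType R) (n : nat)
    (v : nat -> X) (y : X) (i : nat) : R :=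
  \big[Num.max/0]_(A : {set 'I_n}) `|\sum_(k in A) (v (i + k.+1)%N - y)|.

Definition cm_nonexpansive (R : realType) (X : normedModType R) (C : set X)
    (T : X -> X) : Prop :=
  maps_into C T /\ nonexpansive_on C T /\
  forall (n : nat) (y : X) (u : nat -> X), C y -> (forall i, C (u i)) ->
    (limn_esup (fun i => (cm_sup n (fun j => T (u j)) (T y) i)%:E)
     <= limn_esup (fun i => (cm_sup n u y i)%:E))%E.

(* Main.v *)
Require Import Defs.
From HB Require Import structures.
From mathcomp Require Import all_boot all_order all_algebra.
From mathcomp Require Import all_classical all_reals all_analysis.
From mathcomp Require Import zify ring lra.
Import Order.TTheory GRing.Theory Num.Theory.
Import numFieldNormedType.Exports.
Local Open Scope classical_set_scope.
Local Open Scope ring_scope.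
Lemma BW' (R : realType) (r : nat -> R) (B : R) :
  (forall k, `|r k| <= B) ->
  exists (l : R) (f : nat -> nat), (forall n, f n < f n.+1)%N /\
    forall e, 0 < e -> exists K, forall k, (K <= k)%N -> `|l - r (f k)| <= e.
Proof.
move=> rB.
have bnd : bounded_fun r.
  exists B; split; first by rewrite num_real.
  move=> x Bx y _; apply: le_trans (rB y) _; exact: ltW.
have [f finc /cvg_ex[l rl]] := bolzano_weierstrass bnd.
exists l, f; split.
  by move=> n; have := (increasing_seqP f).2 finc n.
move=> e e0; move/cvgrPdist_le: rl => /(_ e e0) [K _ HK].
by exists K => k Kk; apply: HK.
Qed.

Section reals.
Context (R : realType).

Lemma avg_bound (f g : nat -> R) n : (forall i, `|f i| <= g i) ->
  `|n.+1%:R^-1 * \sum_(i < n.+1) f i| <= n.+1%:R^-1 * \sum_(i < n.+1) g i.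
Proof.
move=> hfg; rewrite normrM ger0_norm ?invr_ge0 ?ler0n //.
apply: ler_wpM2l; first by rewrite invr_ge0 ler0n.
apply: le_trans (ler_norm_sum _ _ _) _; apply: ler_sum => i _; exact: hfg.
Qed.

Lemma avg_sub (f : nat -> R) n lam :
  n.+1%:R^-1 * \sum_(i < n.+1) f i - lam = n.+1%:R^-1 * \sum_(i < n.+1) (f i - lam).
Proof.
rewrite sumrB sumr_const card_ord mulrBr; congr (_ - _).
by rewrite -[lam *+ _]mulr_natl mulrA mulVf ?mul1r.
Qed.

Lemma avg_split n (d K : R) (E : nat -> bool) :
  n.+1%:R^-1 * \sum_(i < n.+1) (d + K * (E i)%:R) =
  d + K * (n.+1%:R^-1 * \sum_(i < n.+1) (E i)%:R).
Proof.
rewrite big_split /= sumr_const card_ord -mulr_sumr mulrDr.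
rewrite -[d *+ _]mulr_natl mulrA mulVf ?mul1r ?pnatr_eq0 //.
by rewrite mulrCA.
Qed.

Lemma cnt_lt n J : \sum_(i < n) ((i < J)%N)%:R <= J%:R :> R.
Proof.
rewrite -natr_sum ler_nat.
suff : (\sum_(i < n) ((i < J)%N : nat) <= minn n J)%N.
  by move/leq_trans; apply; exact: geq_minr.
elim: n => [|n IH]; first by rewrite big_ord0.
rewrite big_ord_recr /=.
case: (ltnP n J) => h; move: IH; set s := (\sum_(i < n) _)%N => IH.
  by rewrite addn1; lia.
by rewrite addn0; lia.
Qed.

Lemma cnt_eq_nat n k : (\sum_(i < n) ((i == k :> nat) : nat) <= (k < n))%N.
Proof.
elim: n => [|n IH]; first by rewrite big_ord0.
rewrite big_ord_recr /=.
case: (eqVneq n k) => [<-|h].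
  have -> : (\sum_(i < n) ((i == n :> nat) : nat) = 0)%N.
    apply/eqP; rewrite sum_nat_eq0; apply/forallP => i; apply/implyP => _.
    by rewrite (ltn_eqF (ltn_ord i)).
  by rewrite ltnSn.
rewrite addn0; apply: leq_trans IH _.
by case: (ltnP k n) => // kn; rewrite (leq_trans kn).
Qed.

Lemma cnt_eq n k : \sum_(i < n) ((i == k :> nat))%:R <= 1 :> R.
Proof.
have h : (\sum_(i < n) ((i == k :> nat) : nat) <= 1)%N.
  by apply: leq_trans (cnt_eq_nat n k) _; case: (k < n)%N.
by move: h; rewrite -(ler_nat R) natr_sum.
Qed.

Lemma small_inv (e : R) : 0 < e -> exists J, forall k, (J <= k)%N -> k.+1%:R^-1 <= e.
Proof.
move=> e0; exists (Num.truncn e^-1) => k Jk.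
rewrite invf_ple ?posrE ?ltr0n //.
apply: ltW; apply: lt_le_trans (truncnS_gt _) _.
by rewrite ler_nat ltnS.
Qed.

Lemma small_prod (K A e : R) : 0 <= K -> 0 <= A -> 0 < e ->
  exists N0, forall P, (N0 <= P)%N -> K * (A * P.+1%:R^-1) <= e.
Proof.
move=> K0 A0 e0.
pose d := e / ((K + 1) * (A + 1)).
have KA : 0 < (K + 1) * (A + 1) by apply: mulr_gt0; lra.
have d0 : 0 < d by rewrite divr_gt0.
have [N0 HN] := small_inv _ d0.
exists N0 => P hP; have hq := HN P hP.
have q0 : 0 <= P.+1%:R^-1 :> R by rewrite invr_ge0 ler0n.
have e1 : (K + 1) * (A + 1) * d = e by rewrite /d mulrC -mulrA mulVf ?mulr1 // gt_eqF.
clear HN; move: hq q0 e1 d0; move: (P.+1%:R^-1) => q; clearbody d => hq q0 e1 d0.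
nra.
Qed.

Lemma four_bound (X Y Z W lam e : R) : `|X - lam| <= e -> `|Y - lam| <= e ->
  `|Z - lam| <= e -> `|W - lam| <= e -> `|X - Y - (Z - W)| <= 4%:R * e.
Proof.
rewrite !ler_norml => /andP[? ?] /andP[? ?] /andP[? ?] /andP[? ?].
apply/andP; split; lra.
Qed.

Lemma or_le (a b : bool) : ((a || b) : nat)%:R <= (a : nat)%:R + (b : nat)%:R :> R.
Proof. by rewrite -natrD ler_nat; case: a; case: b. Qed.

End reals.
Lemma cs_alg (R : realType) (p q r : R) : 0 < q ->
  p - r / q * r - (r / q * r - r / q * (r / q * q)) = (p * q - r ^+ 2) / q.
Proof. by move=> q0; field; rewrite gt_eqF. Qed.

Section Hil.
Context (R : realType) (H : completeNormedModType R) (ip : H -> H -> R)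
  (hip : inner_product_inducing_norm ip).

Lemma ipC x y : ip x y = ip y x.
Proof. by case: hip. Qed.

Lemma ipDZl a x y z : ip (a *: x + y) z = a * ip x z + ip y z.
Proof. by case: hip. Qed.

Lemma ip0l z : ip 0 z = 0.
Proof.
have := ipDZl 1 0 0 z; rewrite scaler0 addr0 mul1r => h.
by apply: (addrI (ip 0 z)); rewrite addr0 -h.
Qed.

Lemma ipDl x y z : ip (x + y) z = ip x z + ip y z.
Proof. by rewrite -[x in LHS]scale1r ipDZl mul1r. Qed.

Lemma ipZl a x z : ip (a *: x) z = a * ip x z.
Proof. by rewrite -[_ *: x]addr0 ipDZl ip0l addr0. Qed.

Lemma ipNl x z : ip (- x) z = - ip x z.
Proof. by rewrite -scaleN1r ipZl mulN1r. Qed.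

Lemma ipBl x y z : ip (x - y) z = ip x z - ip y z.
Proof. by rewrite ipDl ipNl. Qed.

Lemma ip0r z : ip z 0 = 0.
Proof. by rewrite ipC ip0l. Qed.
Lemma ipDr x y z : ip z (x + y) = ip z x + ip z y.
Proof. by rewrite ipC ipDl !(ipC z). Qed.
Lemma ipZr a x z : ip z (a *: x) = a * ip z x.
Proof. by rewrite ipC ipZl ipC. Qed.
Lemma ipBr x y z : ip z (x - y) = ip z x - ip z y.
Proof. by rewrite ipC ipBl !(ipC z). Qed.

Lemma ip_suml I (r : seq I) (P : pred I) (F : I -> H) z :
  ip (\sum_(i <- r | P i) F i) z = \sum_(i <- r | P i) ip (F i) z.
Proof. exact: (big_morph (fun x => ip x z) (fun x y => ipDl x y z) (ip0l z)). Qed.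

Lemma ip_sumr I (r : seq I) (P : pred I) (F : I -> H) z :
  ip z (\sum_(i <- r | P i) F i) = \sum_(i <- r | P i) ip z (F i).
Proof. exact: (big_morph (fun x => ip z x) (fun x y => ipDr x y z) (ip0r z)). Qed.

Lemma ip_ge0 x : 0 <= ip x x.
Proof. by case: hip. Qed.

Lemma normE x : `|x| ^+ 2 = ip x x.
Proof. by case: hip => _ _ h _ ->; rewrite sqr_sqrtr. Qed.

Lemma ip_eq0 x : ip x x = 0 -> x = 0.
Proof. by case: hip => _ _ _ h _; exact: h. Qed.

Lemma CS x y : `|ip x y| <= `|x| * `|y|.
Proof.
have [y0|yn0] := eqVneq y 0.
  by rewrite y0 ip0r normr0 normr0 mulr0.
have q0 : 0 < ip y y.
  rewrite lt_def ip_ge0 andbT; apply/negP => /eqP/ip_eq0 /eqP; by rewrite (negbTE yn0).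
set p := ip x x; set q := ip y y; set r := ip x y.
have h : 0 <= ip (x - (r / q) *: y) (x - (r / q) *: y) by exact: ip_ge0.
rewrite ipBl !ipBr !ipZl !ipZr (ipC y x) -/p -/q -/r in h.
have h2 : r ^+ 2 <= p * q.
  have e : p - r / q * r - (r / q * r - r / q * (r / q * q)) = (p * q - r ^+ 2) / q.
    by apply: cs_alg.
  rewrite e in h; rewrite -subr_ge0; move: h.
  by rewrite pmulr_lge0 // invr_gt0.
rewrite -(@ler_sqr _ `|r|) ?nnegrE ?mulr_ge0 ?normr_ge0 //.
by rewrite real_normK ?num_real // exprMn !normE.
Qed.


Lemma inc_lt (f : nat -> nat) : (forall n, f n < f n.+1)%N ->
  forall a b, (a < b)%N -> (f a < f b)%N.
Proof.
move=> hf a b ab; elim: b ab => // b IH; rewrite ltnS leq_eqVlt => /orP[/eqP->|/IH h].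
  exact: hf.
exact: ltn_trans h (hf b).
Qed.

Lemma inc_ge (f : nat -> nat) : (forall n, f n < f n.+1)%N -> forall a, (a <= f a)%N.
Proof.
move=> hf; elim => // a IH; exact: leq_ltn_trans IH (hf a).
Qed.

Lemma ip_bound (a : nat -> H) M : (forall k, `|a k| <= M) ->
  forall k l, `|ip (a k) (a l)| <= M * M.
Proof.
move=> hM k l; apply: le_trans (CS _ _) _.
apply: ler_pM => //; exact: normr_ge0.
Qed.

Lemma extract (a : nat -> H) (M : R) : (forall k, `|a k| <= M) ->
  exists (m : nat -> nat) (lam : R), (forall k, m k < m k.+1)%N /\
  forall e, 0 < e -> exists J, forall k l, (J <= k)%N -> (k < l)%N ->
    `|ip (a (m l)) (a (m k)) - lam| <= e.
Proof.
move=> hM.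
have step : forall (j : nat) (psi : nat -> nat), (forall n, psi n < psi n.+1)%N ->
  exists (psi' : nat -> nat) (lam : R), (forall n, psi' n < psi' n.+1)%N /\
   (forall k, exists k', psi' k = psi k'.+1) /\
   forall k, `|lam - ip (a (psi' k)) (a (psi 0%N))| <= j.+1%:R^-1.
  move=> j psi hpsi.
  have [lam [f [finc hf]]] := @BW' _ (fun k => ip (a (psi k.+1)) (a (psi 0%N))) _
     (fun k => ip_bound _ _ hM _ _).
  have [K HK] := hf j.+1%:R^-1 ltac:(by rewrite invr_gt0 ltr0n).
  exists (fun k => psi (f (k + K)%N).+1), lam; split; last split.
  - move=> n; apply: inc_lt => //; rewrite ltnS; apply: finc.
  - by move=> k; exists (f (k + K)%N).
  - by move=> k; apply: HK; rewrite leq_addl.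
have step' : forall p : nat * (nat -> nat), exists q : (nat -> nat) * R,
  (forall n, p.2 n < p.2 n.+1)%N ->
   (forall n, q.1 n < q.1 n.+1)%N /\
   (forall k, exists k', q.1 k = p.2 k'.+1) /\
   forall k, `|q.2 - ip (a (q.1 k)) (a (p.2 0%N))| <= p.1.+1%:R^-1.
  move=> [j psi]; have [h|h] := pselect (forall n, psi n < psi n.+1)%N.
    have [psi' [lam hh]] := step j psi h; by exists (psi', lam).
  by exists (id, 0).
have [Phi hPhi] := choice step'.
pose psi := fix F j := if j is j'.+1 then (Phi (j', F j')).1 else id.
pose lj j := (Phi (j, psi j)).2.
pose mj j := psi j 0%N.
have F1 : forall j n, (psi j n < psi j n.+1)%N.
  elim => [|j IH] n //=; by have [] := hPhi (j, psi j) IH.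
have F2 : forall j k, exists k', psi j.+1 k = psi j k'.+1.
  move=> j k; have [_ [h _]] := hPhi (j, psi j) (F1 j); exact: h.
have F3 : forall j k, `|lj j - ip (a (psi j.+1 k)) (a (mj j))| <= j.+1%:R^-1.
  move=> j k; have [_ [_ h]] := hPhi (j, psi j) (F1 j); exact: h.
have F4 : forall j d k, exists k', psi (j + d)%N k = psi j k'.
  move=> j; elim => [|d IH] k; first by exists k; rewrite addn0.
  rewrite addnS; have [k1 ->] := F2 (j + d)%N k.
  have [k2 ->] := IH k1.+1; by exists k2.
have F4' : forall j j', (j < j')%N ->
    `|lj j - ip (a (mj j')) (a (mj j))| <= j.+1%:R^-1.
  move=> j j' jj'; rewrite /mj -(subnKC jj').
  have [k ->] := F4 j.+1 (j' - j.+1)%N 0%N; exact: F3.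
have F5 : forall j, (mj j < mj j.+1)%N.
  move=> j; rewrite /mj; have [k ->] := F2 j 0%N; exact: inc_lt.
have lb : forall j, `|lj j| <= M * M + 1.
  move=> j; have h := F3 j 0%N.
  have h2 := ip_bound _ _ hM (psi j.+1 0%N) (mj j).
  have h3 : j.+1%:R^-1 <= (1 : R) by rewrite invf_le1 ?ler1n ?ltr0n.
  have := ler_distD (ip (a (psi j.+1 0%N)) (a (mj j))) (lj j) 0.
  rewrite !subr0 => hh; apply: le_trans hh _; rewrite addrC; apply: lerD => //; exact: le_trans h h3.
have [lam [tau [tinc htau]]] := @BW' _ _ _ lb.
exists (fun k => mj (tau k)), lam; split.
  move=> k /=; apply: (inc_lt _ F5); exact: tinc.
move=> e e0.
have e20 : 0 < e / 2 by rewrite divr_gt0.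
have [J1 HJ1] := htau _ e20.
have [J2 HJ2] := @small_inv _ _ e20.
exists (maxn J1 J2) => k l; rewrite geq_max => /andP[k1 k2] kl.
have tkl : (tau k < tau l)%N by exact: inc_lt.
have h1 := F4' _ _ tkl.
have h2 := HJ1 _ k1.
have h3 : (tau k).+1%:R^-1 <= e / 2.
  apply: HJ2; apply: leq_trans k2 (inc_ge _ tinc k).
set x := ip _ _.
have -> : x - lam = (x - lj (tau k)) + (lj (tau k) - lam) by rewrite addrA subrK.
apply: le_trans (ler_normD _ _) _.
rewrite [e in _ <= e](splitr e); apply: lerD.
  by rewrite distrC; exact: le_trans h1 h3.
by rewrite distrC.
Qed.

Definition avg (c : nat -> H) n : H := n.+1%:R^-1 *: \sum_(i < n.+1) c i.

Lemma avg_norm (c : nat -> H) L n : (forall k, `|c k| <= L) -> `|avg c n| <= L.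
Proof.
move=> hL; rewrite /avg normrZ ger0_norm ?invr_ge0 ?ler0n //.
apply: (@le_trans _ _ (n.+1%:R^-1 * \sum_(i < n.+1) L)).
  apply: ler_wpM2l; first by rewrite invr_ge0 ler0n.
  apply: le_trans (ler_norm_sum _ _ _) _; apply: ler_sum => i _; exact: hL.
by rewrite sumr_const card_ord -[L *+ _]mulr_natl mulrA mulVf ?mul1r // pnatr_eq0.
Qed.

Lemma ip_avg_r (c : nat -> H) x P :
  ip x (avg c P) = P.+1%:R^-1 * \sum_(j < P.+1) ip x (c j).
Proof. by rewrite /avg ipZr ip_sumr. Qed.

Lemma ip_avg_l (c : nat -> H) x N :
  ip (avg c N) x = N.+1%:R^-1 * \sum_(j < N.+1) ip (c j) x.
Proof. by rewrite /avg ipZl ip_suml. Qed.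

Lemma ip_sub_bound x y x' y' : `|ip x y - ip x' y'| <= `|x - x'| * `|y| + `|x'| * `|y - y'|.
Proof.
have -> : ip x y - ip x' y' = ip (x - x') y + ip x' (y - y').
  by rewrite ipBl ipBr addrA subrK.
apply: le_trans (ler_normD _ _) _; apply: lerD; exact: CS.
Qed.

Lemma weak_lim (c : nat -> H) (L lam : R) : (forall k, `|c k| <= L) ->
  (forall e, 0 < e -> exists J, forall k l, (J <= k)%N -> (k < l)%N ->
    `|ip (c l) (c k) - lam| <= e) ->
  exists z : H,
  (forall e, 0 < e -> exists N0, forall N, (N0 <= N)%N -> `|z - avg c N| <= e) /\
  (forall e, 0 < e -> exists J, forall k l, (J <= k)%N -> (J <= l)%N -> k <> l ->
    `|ip (c k - z) (c l - z) - 0| <= e).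
Proof.
move=> hL hU.
have L0 : 0 <= L by apply: le_trans (hL 0%N).
have Us : forall e, 0 < e -> exists J, forall k l, (J <= k)%N -> (J <= l)%N -> k <> l ->
    `|ip (c k) (c l) - lam| <= e.
  move=> e e0; have [J HJ] := hU e e0; exists J => k l Jk Jl kl.
  case: (ltngtP k l) => h; last by [].
  - by rewrite ipC; apply: HJ.
  - by apply: HJ.
pose K0 := L * L + `|lam|.
have K00 : 0 <= K0 by rewrite /K0 addr_ge0 ?mulr_ge0.
have hK0 : forall i j, `|ip (c i) (c j) - lam| <= K0.
  move=> i j; apply: le_trans (ler_normB _ _) _; apply: lerD => //.
  exact: ip_bound.
have R1 : forall e, 0 < e -> exists J, forall k, (J <= k)%N -> forall P,
    `|ip (c k) (avg c P) - lam| <= e + K0 * (J.+1%:R * P.+1%:R^-1).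
  move=> e e0; have [J HJ] := Us e e0; exists J => k Jk P.
  rewrite ip_avg_r (@avg_sub _ (fun j => ip (c k) (c j))).
  have hb : forall j, `|(fun j => ip (c k) (c j) - lam) j| <=
      (fun j => e + K0 * (((j < J)%N || (j == k)) : nat)%:R) j.
    move=> j; case: (boolP ((j < J)%N || (j == k))) => h /=.
      by rewrite mulr1; apply: le_trans (hK0 _ _) _; rewrite lerDr ltW.
    rewrite mulr0 addr0; apply: HJ => //.
      by move: h; rewrite negb_or -leqNgt => /andP[].
    by move: h; rewrite negb_or => /andP[_ /eqP] /nesym.
  apply: le_trans (@avg_bound _ _ _ P hb) _.
  rewrite (@avg_split _ P e K0 (fun j => (j < J)%N || (j == k))) lerD2l.
  apply: ler_wpM2l => //.
  rewrite mulrC; apply: ler_wpM2r; first by rewrite invr_ge0 ler0n.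
  apply: (@le_trans _ _ (\sum_(i < P.+1) ((((i < J)%N) : nat)%:R + ((i == k :> nat) : nat)%:R))).
    by apply: ler_sum => i _; exact: or_le.
  rewrite big_split /= -(addn1 J) natrD; apply: lerD; [exact: cnt_lt|exact: cnt_eq].
have R2 : forall i P, `|ip (c i) (avg c P) - lam| <= K0.
  move=> i P; rewrite ip_avg_r (@avg_sub _ (fun j => ip (c i) (c j))).
  have hb : forall j, `|(fun j => ip (c i) (c j) - lam) j| <=
      (fun j => K0 + 0 * ((false : bool) : nat)%:R) j.
    by move=> j /=; rewrite mul0r addr0.
  apply: le_trans (@avg_bound _ _ _ P hb) _.
  by rewrite (@avg_split _ P K0 0 (fun j => false)) mul0r addr0.
have R3 : forall e, 0 < e -> exists N0, forall N P, (N0 <= N)%N -> (N0 <= P)%N ->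
    `|ip (avg c N) (avg c P) - lam| <= e.
  move=> e e0; have e3 : 0 < e / 3%:R by rewrite divr_gt0.
  have [J HJ] := R1 _ e3.
  have [N1 HN1] := @small_prod _ _ _ _ K00 (ler0n _ J.+1) e3.
  have [N2 HN2] := @small_prod _ _ _ _ K00 (ler0n _ J) e3.
  exists (maxn N1 N2) => N P; rewrite !geq_max => /andP[N1N N2N] /andP[N1P N2P].
  rewrite ip_avg_l (@avg_sub _ (fun j => ip (c j) (avg c P))).
  have hb : forall i, `|(fun i => ip (c i) (avg c P) - lam) i| <=
     (fun i => (e / 3%:R + K0 * (J.+1%:R * P.+1%:R^-1)) + K0 * ((i < J)%N : nat)%:R) i.
    move=> i; case: (ltnP i J) => h /=.
      rewrite mulr1; apply: le_trans (R2 _ _) _; rewrite lerDr addr_ge0 //.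
        exact: ltW.
      by rewrite mulr_ge0 // mulr_ge0 // invr_ge0 ler0n.
    by rewrite mulr0 addr0; apply: HJ.
  apply: le_trans (@avg_bound _ _ _ N hb) _.
  rewrite (@avg_split _ N _ K0 (fun i => (i < J)%N)).
  have h1 := HN1 P N1P.
  have h2 : K0 * (N.+1%:R^-1 * \sum_(i < N.+1) ((i < J)%N : nat)%:R) <= e / 3%:R.
    apply: le_trans (HN2 N N2N); apply: ler_wpM2l => //.
    by rewrite mulrC; apply: ler_wpM2r; [rewrite invr_ge0 ler0n|exact: cnt_lt].
  have : e / 3%:R + e / 3%:R + e / 3%:R = e by field.
  move: h1 h2; set u := K0 * (_ * _); set v := K0 * (_ * _); move: u v (e / 3%:R) => u v t.
  lra.
have R4 : forall eps, 0 < eps -> exists N0, forall N P, (N0 <= N)%N -> (N0 <= P)%N ->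
    `|avg c N - avg c P| < eps.
  move=> eps eps0; have e0 : 0 < eps ^+ 2 / 8%:R by rewrite divr_gt0 // exprn_gt0.
  have [N0 HN] := R3 _ e0; exists N0 => N P hN hP.
  have h := normE (avg c N - avg c P).
  rewrite ipBl !ipBr in h.
  have h1 := HN _ _ hN hN; have h2 := HN _ _ hN hP; have h3 := HN _ _ hP hN.
  have h4 := HN _ _ hP hP.
  have := @four_bound _ _ _ _ _ _ _ h1 h2 h3 h4; rewrite -h.
  have n0 := normr_ge0 (avg c N - avg c P).
  move: (`|avg c N - avg c P|) n0 => x n0.
  rewrite ger0_norm ?exprn_ge0 // => hx.
  have e8 : 4%:R * (eps ^+ 2 / 8%:R) = eps ^+ 2 / 2%:R by field.
  rewrite e8 in hx.
  nra.
have cv : cvg (avg c @ \oo).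
  apply/cauchy_cvgP/cauchy_exP => eps eps0.
  have [N0 HN] := R4 eps eps0; exists (avg c N0); exists N0 => // n /= hn.
  by rewrite -ball_normE /=; exact: HN.
set z := lim (avg c @ \oo).
have hz : forall e, 0 < e -> exists N0, forall N, (N0 <= N)%N -> `|z - avg c N| <= e.
  move=> e e0; move/cvgrPdist_le: cv => /(_ e e0) [N0 _ HN].
  by exists N0 => N hN; apply: HN.
have L1 : 0 < 2%:R * L + 1 by lra.
have hA : forall e, 0 < e -> exists J, forall k, (J <= k)%N -> `|ip (c k) z - lam| <= e.
  move=> e e0; have e3 : 0 < e / 3%:R by rewrite divr_gt0.
  have [J HJ] := R1 _ e3.
  have [N1 HN1] := @small_prod _ _ _ _ K00 (ler0n _ J.+1) e3.
  have d0 : 0 < e / 3%:R / (L + 1) by rewrite divr_gt0 //; lra.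
  have [N2 HN2] := hz _ d0.
  exists J => k Jk; pose P := maxn N1 N2.
  have h1 := HJ k Jk P; have h2 := HN1 P (leq_maxl _ _).
  have h3 := HN2 P (leq_maxr _ _).
  have h4 := ip_sub_bound (c k) z (c k) (avg c P).
  rewrite subrr normr0 mul0r add0r in h4.
  have h5 : `|c k| * `|z - avg c P| <= e / 3%:R.
    apply: le_trans (ler_pM (normr_ge0 _) (normr_ge0 _) (hL k) h3) _.
    rewrite mulrCA; apply: ler_piMr; first exact: ltW.
    rewrite ler_pdivrMr ?mul1r; lra.
  have hdec : ip (c k) z - lam = (ip (c k) (avg c P) - lam) + (ip (c k) z - ip (c k) (avg c P)).
    by rewrite [RHS]addrC [RHS]addrA subrK.
  rewrite hdec; apply: le_trans (ler_normD _ _) _.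
  have : e / 3%:R + e / 3%:R + e / 3%:R = e by field.
  move: h1 h2 h4 h5; set u := K0 * _; move: (e / 3%:R) => t.
  move: (`|ip (c k) z - ip (c k) (avg c P)|) => w.
  move: (`|ip (c k) (avg c P) - lam|) => v.
  move: (`|c k| * `|z - avg c P|) => r.
  lra.
have hB : forall e, 0 < e -> `|ip z z - lam| <= e.
  move=> e e0; have e3 : 0 < e / 3%:R by rewrite divr_gt0.
  have [N0 HN0] := R3 _ e3.
  have [N1 HN1] := hz _ ltr01.
  have d0 : 0 < e / 3%:R / (2%:R * L + 1) by rewrite divr_gt0.
  have [N2 HN2] := hz _ d0.
  pose P := maxn N0 (maxn N1 N2).
  have P0 : (N0 <= P)%N by exact: leq_maxl.
  have P1 : (N1 <= P)%N by rewrite /P (leq_trans (leq_maxl N1 N2)) ?leq_maxr.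
  have P2 : (N2 <= P)%N by rewrite /P (leq_trans (leq_maxr N1 N2)) ?leq_maxr.
  have h1 := HN0 _ _ P0 P0; have h2 := HN1 _ P1; have h3 := HN2 _ P2.
  have hzL : `|z| <= L + 1.
    have -> : z = (z - avg c P) + avg c P by rewrite subrK.
    apply: le_trans (ler_normD _ _) _; rewrite [L + 1]addrC; apply: lerD => //; exact: (avg_norm c L P hL).
  have hP := avg_norm c L P hL.
  have h4 := ip_sub_bound z z (avg c P) (avg c P).
  have hdec : ip z z - lam = (ip (avg c P) (avg c P) - lam) + (ip z z - ip (avg c P) (avg c P)).
    by rewrite [RHS]addrC [RHS]addrA subrK.
  rewrite hdec; apply: le_trans (ler_normD _ _) _.
  have h5 : `|z - avg c P| * `|z| + `|avg c P| * `|z - avg c P| <= 2%:R * (e / 3%:R).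
    have hd : `|z - avg c P| * (2%:R * L + 1) <= e / 3%:R.
      by rewrite -ler_pdivlMr.
    have n1 := normr_ge0 (z - avg c P); have n2 := normr_ge0 (avg c P).
    move: hd hzL hP n1 n2 h3; move: (`|z - avg c P|) (`|z|) (`|avg c P|) => a b d.
    move: (e / 3%:R) => t; nra.
  have : e / 3%:R + e / 3%:R + e / 3%:R = e by field.
  move: h1 h4 h5; move: (e / 3%:R) => t.
  move: (`|ip z z - ip (avg c P) (avg c P)|) => w.
  move: (`|ip (avg c P) (avg c P) - lam|) => v.
  move: (`|z - avg c P| * `|z| + `|avg c P| * `|z - avg c P|) => r.
  lra.
exists z; split => // e e0.
have e4 : 0 < e / 4%:R by rewrite divr_gt0.
have [J1 HJ1] := hA _ e4; have [J2 HJ2] := Us _ e4.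
exists (maxn J1 J2) => k l; rewrite !geq_max => /andP[k1 k2] /andP[l1 l2] kl.
rewrite subr0 ipBl !ipBr (ipC z (c l)).
have := @four_bound _ _ _ _ _ _ _ (HJ2 _ _ k2 l2 kl) (HJ1 _ k1) (HJ1 _ l1) (hB _ e4).
have -> : 4%:R * (e / 4%:R) = e by field.
done.
Qed.
End Hil.
Section limsup.
Context (R : realType).
Local Open Scope ereal_scope.

Lemma esup_le_ev (u : (\bar R)^nat) (b : \bar R) N :
  (forall k, (N <= k)%N -> u k <= b) -> limn_esup u <= b.
Proof.
move=> hb; rewrite limn_esup_lim; have /cvg_lim -> // := @cvg_esups_inf R u.
apply: le_trans (ereal_inf_lbound _) _; first by exists N.
by apply: ge_ereal_sup => _ [k /= Nk <-]; exact: hb.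
Qed.

Lemma esup_ge_ev (u : (\bar R)^nat) (b : \bar R) N :
  (forall k, (N <= k)%N -> b <= u k) -> b <= limn_esup u.
Proof.
move=> hb; rewrite limn_esup_lim; have /cvg_lim -> // := @cvg_esups_inf R u.
apply: le_ereal_inf_tmp => _ [m _ <-].
apply: le_trans (hb (maxn m N) (leq_maxr _ _)) _.
by apply: ereal_sup_ubound; exists (maxn m N) => //=; exact: leq_maxl.
Qed.
End limsup.

Lemma combo_sub (R : realType) (V : lmodType R) (t c : R) (u v w : V) :
  t *: u + c *: w - (t *: v + c *: w) = t *: (u - v).
Proof. by rewrite opprD addrACA subrr addr0 scalerBr. Qed.

Lemma combo_sub2 (R : realType) (V : lmodType R) (t : R) (u w : V) :
  u - (t *: u + (1 - t) *: w) = (1 - t) *: (u - w).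
Proof.
rewrite scalerBr scalerBl scale1r opprD addrA.
by rewrite -{1}(scale1r u) -scalerBl; congr (_ - _).
Qed.

Section approx.
Context (R : realType) (X : normedModType R) (C : set X) (T : X -> X).

Lemma approx_fix x0 : C x0 -> bounded_subset C -> convex_subset C ->
  maps_into C T -> nonexpansive_on C T ->
  forall e : R, 0 < e -> exists x, C x /\ `|T x - x| <= e.
Proof.
move=> Cx0 [M hM] cvx mT neT e e0.
have M0 : 0 <= M by apply: le_trans (hM _ Cx0).
pose D := 2 * M.
have hD : forall x y, C x -> C y -> `|x - y| <= D.
  move=> x y Cx Cy; apply: le_trans (ler_normB _ _) _.
  by have := hM _ Cx; have := hM _ Cy; rewrite /D; lra.
pose e' := Num.min e 1.
have e'0 : 0 < e' by rewrite lt_min e0 ltr01.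
have e'1 : e' <= 1 by rewrite ge_min lexx orbT.
have e'e : e' <= e by rewrite ge_min lexx.
pose s := e' / (2 * (D + 1)).
have D0 : 0 <= D by rewrite /D; lra.
have s0 : 0 < s by rewrite /s divr_gt0 //; lra.
have s1 : s <= 1 / 2.
  rewrite /s ler_pdivrMr; last lra.
  rewrite mulrA; lra.
have sD : s * D <= e / 2.
  rewrite /s mulrAC ler_pdivrMr; last lra.
  nra.
pose t := 1 - s.
have t0 : 0 <= t by rewrite /t; lra.
have t1 : t < 1 by rewrite /t; lra.
pose S x := t *: T x + (1 - t) *: x0.
have CS x : C x -> C (S x) by move=> Cx; apply: cvx => //; [exact: mT|lra].
pose y n := iter n S x0.
have Cy n : C (y n) by elim: n => [|n IH] //=; exact: CS.
have hS a b : C a -> C b -> `|S a - S b| <= t * `|a - b|.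
  move=> Ca Cb; have -> : S a - S b = t *: (T a - T b).
    exact: combo_sub.
  rewrite normrZ ger0_norm //.
  by apply: ler_wpM2l => //; exact: neT.
have hy n : `|y n.+1 - y n| <= t ^+ n * D.
  elim: n => [|n IH]; first by rewrite expr0 mul1r; apply: hD => //; exact: Cy 1%N.
  have -> : y n.+2 - y n.+1 = S (y n.+1) - S (y n) by [].
  apply: le_trans (hS _ _ (Cy _) (Cy _)) _.
  by rewrite exprS -mulrA; apply: ler_wpM2l.
have [N hN] : exists N, t ^+ N <= s.
  have := cvg_expr (z := t); rewrite ger0_norm // => /(_ t1).
  move/cvgrPdist_le => /(_ s s0) [N _ HN].
  exists N; have := HN N (leqnn N); rewrite /= sub0r normrN.
  by move/(le_trans (ler_norm _)).
exists (y N); split => //.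
have e1 : T (y N) - y N = (T (y N) - S (y N)) + (y N.+1 - y N) by rewrite addrA subrK.
rewrite e1; apply: le_trans (ler_normD _ _) _.
have e2 : T (y N) - S (y N) = (1 - t) *: (T (y N) - x0).
  exact: combo_sub2.
rewrite e2 normrZ ger0_norm; last lra.
have h1 : `|T (y N) - x0| <= D by apply: hD => //; exact: mT.
have h2 := hy N.
have h3 : t ^+ N * D <= s * D by apply: ler_wpM2r.
have : (1 - t) * `|T (y N) - x0| <= s * D.
  rewrite /t opprB addrC subrK; apply: ler_wpM2l => //; lra.
lra.
Qed.
End approx.

Lemma sum_sub_le (R : realType) n (A : {set 'I_n}) (G : 'I_n -> R) :
  (forall l, 0 <= G l) -> \sum_(l in A) G l <= \sum_l G l.
Proof.
move=> G0; rewrite big_mkcond /=; apply: ler_sum => l _.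
by case: (l \in A).
Qed.

Lemma sum_ind (R : realType) n (k : 'I_n) (e L : R) :
  \sum_(l : 'I_n) (e + L * ((k == l) : nat)%:R) = n%:R * e + L.
Proof.
rewrite big_split /= sumr_const card_ord -[e *+ _]mulr_natl; congr (_ + _).
rewrite -mulr_sumr (bigD1 k) //= eqxx big1 ?addr0 ?mulr1 // => l /negbTE.
by rewrite eq_sym => ->.
Qed.

Lemma avg_convex (R : realType) (X : normedModType R) (C : set X) (y : nat -> X) :
  convex_subset C -> (forall i, C (y i)) ->
  forall N, C (N.+1%:R^-1 *: \sum_(i < N.+1) y i).
Proof.
move=> cvx Cy; elim => [|N IH].
  by rewrite big_ord1 invr1 scale1r.
have t0 : 0 <= N.+1%:R / N.+2%:R :> R by rewrite divr_ge0.
have t1 : N.+1%:R / N.+2%:R <= 1 :> R by rewrite ler_pdivrMr ?mul1r ?ler_nat ?ltr0n.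
have := cvx _ _ _ IH (Cy N.+1) t0 t1.
congr C; rewrite [in RHS]big_ord_recr /= [in RHS]scalerDr scalerA; congr (_ *: _ + _ *: _).
  by rewrite mulrC mulrA mulVf ?mul1r ?pnatr_eq0.
have -> : N.+2%:R = N.+1%:R + 1 :> R by rewrite natr1.
have h : (N.+1%:R + 1 : R) != 0 by rewrite natr1 pnatr_eq0.
by field.
Qed.

Lemma vec_id (V : zmodType) (a b c d : V) :
  (a - d) + (b - a) - (b - c) = c - d.
Proof. by rewrite (addrC (a - d)) addrA subrK opprB (addrC (b - d)) addrA subrK. Qed.

Theorem corollary4p11 (R : realType) (X : completeNormedModType R) :
  isomorphic_to_Hilbert X ->
  forall (C : set X), C !=set0 -> bounded_subset C -> closed C -> convex_subset C ->
  forall T : X -> X, cm_nonexpansive C T ->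
  exists x, C x /\ T x = x.
Proof.
move=> [H [ip [f [g [hip fK gK [c1 hc1] [c2 hc2]]]]]] C [x0 Cx0] bC clC cvx T
  [mT [neT hcm]].
have [M hM] := bC.
have M0 : 0 <= M by apply: le_trans (hM _ Cx0).
have hx : forall p : nat, exists x, C x /\ `|T x - x| <= p.+1%:R^-1.
  move=> p; apply: (@approx_fix _ _ C T x0 Cx0) => //.
have [xs hxs] := choice hx.
pose a := fun k => f (xs k).
have ha : forall k, `|a k| <= `|c1| * M.
  move=> k; apply: le_trans (hc1 _) _; apply: le_trans (ler_wpM2r (normr_ge0 _) (ler_norm c1)) _.
  by apply: ler_wpM2l => //; apply: hM; case: (hxs k).
have [m [lam [minc hU]]] := @extract _ _ ip hip _ _ ha.
pose c := fun k => a (m k).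
have hc : forall k, `|c k| <= `|c1| * M by move=> k; exact: ha.
have [z [hz horth]] := @weak_lim _ _ ip hip _ _ _ hc hU.
have gD u v : g (u + v) = g u + g v.
  by rewrite -{1}(gK u) -{1}(gK v) -linearD fK.
have gZ (r : R) u : g (r *: u) = r *: g u.
  by rewrite -{1}(gK u) -linearZ fK.
have g0 : g 0 = 0 by rewrite -(linear0 f) fK.
have gN u : g (- u) = - g u by rewrite -scaleN1r gZ scaleN1r.
have gB u v : g (u - v) = g u - g v by rewrite gD gN.
have gsum (I : Type) (r : seq I) (P : pred I) (F : I -> H) :
    g (\sum_(i <- r | P i) F i) = \sum_(i <- r | P i) g (F i).
  exact: (big_morph g gD g0).
pose u := fun k => xs (m k).
have Cu : forall k, C (u k) by move=> k; case: (hxs (m k)).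
have gc : forall k, g (c k) = u k by move=> k; rewrite /c /a fK.
pose zX := g z.
have CzX : C zX.
  pose v := fun N => N.+1%:R^-1 *: \sum_(i < N.+1) u i.
  have Cv : forall N, C (v N) by move=> N; apply: avg_convex.
  have gv : forall N, g (@avg _ H c N) = v N.
    by move=> N; rewrite /avg gZ gsum; under eq_bigr do rewrite gc.
  suff hv : v @ \oo --> zX by exact: (@closed_cvg _ _ _ _ v C clC (nearW _ Cv) zX hv).
  apply/cvgrPdist_le => eps eps0.
  have d0 : 0 < eps / (`|c2| + 1) by rewrite divr_gt0 // ltr_pwDr.
  have [N0 HN] := hz _ d0; exists N0 => // N /= hN.
  rewrite -gv -gB; apply: le_trans (hc2 _) _.
  apply: le_trans (ler_wpM2r (normr_ge0 _) (ler_norm c2)) _.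
  apply: le_trans (ler_wpM2l (normr_ge0 _) (HN _ hN)) _.
  rewrite mulrCA; apply: ler_piMr; first exact: ltW.
  by rewrite ler_pdivrMr ?mul1r ?ltr_pwDr // lerDl.
pose Ld := `|c1| * M + `|z|.
have Ld0 : 0 <= Ld by rewrite addr_ge0 // mulr_ge0.
pose Ld' := Ld + 1.
have Ld'0 : 0 < Ld' by rewrite /Ld'; lra.
have hd : forall k, `|c k - z| <= Ld.
  move=> k; apply: le_trans (ler_normB _ _) _; rewrite lerD2r; exact: hc.
pose K := 2%:R * `|c2| * Ld'.
have K0 : 0 <= K by rewrite /K; apply: mulr_ge0; [apply: mulr_ge0|exact: ltW].
have hup : forall m', (0 < m')%N -> exists J, forall i, (J <= i)%N ->
    forall A : {set 'I_(m' * m')},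
    `|\sum_(k in A) (u (i + k.+1)%N - zX)| <= m'%:R * K.
  move=> m' m'0; pose n := (m' * m')%N.
  have n0 : (0 < n)%N by rewrite muln_gt0 m'0.
  have eps0 : 0 < Ld' ^+ 2 / n%:R by rewrite divr_gt0 ?exprn_gt0 ?ltr0n.
  have [J HJ] := horth _ eps0.
  exists J => i Ji A.
  have -> : \sum_(k in A) (u (i + k.+1)%N - zX) = g (\sum_(k in A) (c (i + k.+1)%N - z)).
    by rewrite gsum; apply: eq_bigr => k _; rewrite gB gc.
  set D := \sum_(k in A) _.
  apply: le_trans (hc2 _) _.
  apply: le_trans (ler_wpM2r (normr_ge0 _) (ler_norm c2)) _.
  suff hD : `|D| <= 2%:R * m'%:R * Ld'.
    apply: le_trans (ler_wpM2l (normr_ge0 _) hD) _.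
    by rewrite /K le_eqVlt; apply/orP; left; apply/eqP; ring.
  have hD2 : `|D| ^+ 2 <= 2%:R * n%:R * Ld' ^+ 2.
    rewrite (@normE _ _ _ hip) /D (@ip_suml _ _ _ hip).
    under eq_bigr do rewrite (@ip_sumr _ _ _ hip).
    apply: le_trans (ler_norm _) _.
    apply: le_trans (ler_norm_sum _ _ _) _.
    apply: (@le_trans _ _ (\sum_(k in A) \sum_(l in A)
       (Ld' ^+ 2 / n%:R + Ld ^+ 2 * ((k == l) : nat)%:R))).
      apply: ler_sum => k _; apply: le_trans (ler_norm_sum _ _ _) _.
      apply: ler_sum => l _.
      case: (eqVneq k l) => [<-|kl] /=.
        rewrite mulr1; apply: le_trans (@CS _ _ _ hip _ _) _.
        apply: le_trans (ler_pM (normr_ge0 _) (normr_ge0 _) (hd _) (hd _)) _.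
        by rewrite -expr2 lerDr ltW.
      rewrite mulr0 addr0; have := HJ (i + k.+1)%N (i + l.+1)%N.
      rewrite subr0; apply.
      - by rewrite (leq_trans Ji) ?leq_addr.
      - by rewrite (leq_trans Ji) ?leq_addr.
      - by move=> /eqP; rewrite eqn_add2l eqSS => /eqP /val_inj /eqP; rewrite (negbTE kl).
    have hin : forall k : 'I_n, 0 <= \sum_(l in A) (Ld' ^+ 2 / n%:R + Ld ^+ 2 * ((k == l) : nat)%:R).
      move=> k; apply: sumr_ge0 => l _; apply: addr_ge0; first exact: ltW.
      by apply: mulr_ge0; rewrite ?sqr_ge0 ?ler0n.
    apply: le_trans (@sum_sub_le _ _ A _ hin) _.
    apply: (@le_trans _ _ (\sum_(k : 'I_n) \sum_(l : 'I_n)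
       (Ld' ^+ 2 / n%:R + Ld ^+ 2 * ((k == l) : nat)%:R))).
      apply: ler_sum => k _; apply: sum_sub_le => l; apply: addr_ge0; first exact: ltW.
      by apply: mulr_ge0; rewrite ?sqr_ge0 ?ler0n.
    under eq_bigr do rewrite sum_ind.
    rewrite sumr_const card_ord -[_ *+ n]mulr_natl.
    have -> : n%:R * (Ld' ^+ 2 / n%:R) = Ld' ^+ 2 :> R.
      by field; rewrite pnatr_eq0 -lt0n.
    have : Ld ^+ 2 <= Ld' ^+ 2 by rewrite /Ld'; nra.
    have : 0 <= n%:R :> R by rewrite ler0n.
    move: (n%:R) (Ld ^+ 2) (Ld' ^+ 2) => nn x y hn hxy; nra.
  have hn : n%:R = m'%:R ^+ 2 :> R by rewrite /n natrM expr2.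
  rewrite hn in hD2.
  have : 0 <= m'%:R :> R by rewrite ler0n.
  have := normr_ge0 D.
  have hw : 0 <= m'%:R * Ld' by rewrite mulr_ge0 ?ler0n ?ltW.
  have e1 : 2%:R * m'%:R ^+ 2 * Ld' ^+ 2 = 2%:R * (m'%:R * Ld') ^+ 2 :> R by ring.
  have e2 : 2%:R * m'%:R * Ld' = 2%:R * (m'%:R * Ld') :> R by ring.
  rewrite e1 in hD2; rewrite e2 => _ _.
  have := normr_ge0 D.
  move: hD2 hw; move: (`|D|) (m'%:R * Ld') => x w h1 h2 h3.
  nra.
have key : forall m', (0 < m')%N ->
    (m' * m')%:R * `|T zX - zX| <= 2%:R * (m'%:R * K) + 1.
  move=> m' m'0; have [J HJ] := hup m' m'0.
  have h := hcm (m' * m')%N zX u CzX Cu.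
  have hR : (limn_esup (fun i => (cm_sup (m' * m') u zX i)%:E) <= (m'%:R * K)%:E)%E.
    apply: (@esup_le_ev _ _ _ J) => i Ji; rewrite lee_fin /cm_sup.
    apply: bigmax_le; first by rewrite mulr_ge0 ?ler0n.
    by move=> A _; exact: HJ.
  have hL : (((m' * m')%:R * `|T zX - zX| - m'%:R * K - 1)%:E <=
      limn_esup (fun i => (cm_sup (m' * m') (fun j => T (u j)) (T zX) i)%:E))%E.
    apply: (@esup_ge_ev _ _ _ (maxn J (m' * m'))) => i; rewrite geq_max => /andP[Ji ni].
    rewrite lee_fin /cm_sup.
    have hb := le_bigmax 0 (fun A : {set 'I_(m' * m')} =>
      `|\sum_(k in A) (T (u (i + k.+1)%N) - T zX)|) [set: 'I_(m' * m')]%SET.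
    apply: le_trans _ hb.
    set n := (m' * m')%N.
    have hu := HJ i Ji [set: 'I_n]%SET.
    set ST := \sum_(k in [set: 'I_n]%SET) _.
    set SU := \sum_(k in [set: 'I_n]%SET) _ in hu.
    pose SD := \sum_(k in [set: 'I_n]%SET) (T (u (i + k.+1)%N) - u (i + k.+1)%N).
    have hSD : `|SD| <= 1.
      apply: le_trans (ler_norm_sum _ _ _) _.
      apply: (@le_trans _ _ (\sum_(k in [set: 'I_n]%SET) i.+1%:R^-1)).
        apply: ler_sum => k _.
        have [_ hk] := hxs (m (i + k.+1)%N).
        apply: le_trans hk _.
        rewrite lef_pV2 ?posrE ?ltr0n // ler_nat ltnS.
        apply: leq_trans (inc_ge _ minc _); exact: leq_addr.
      rewrite sumr_const cardsT card_ord -[_ *+ n]mulr_natl.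
      rewrite ler_pdivrMr ?ltr0n // mul1r ler_nat; exact: leqW.
    have eq : (T zX - zX) *+ n = SU + SD - ST.
      rewrite /SU /SD /ST -big_split /= -sumrB.
      rewrite (eq_bigr (fun _ => T zX - zX)); last by move=> k _; exact: vec_id.
      by rewrite sumr_const cardsT card_ord.
    have hn : `|(T zX - zX) *+ n| = n%:R * `|T zX - zX| by rewrite normrMn mulr_natl.
    have tri : `|SU + SD - ST| <= `|SU| + `|SD| + `|ST|.
      apply: le_trans (ler_normB _ _) _; rewrite lerD2r; exact: ler_normD.
    rewrite -hn eq.
    move: tri hu hSD; move: (`|SU + SD - ST|) (`|SU|) (`|SD|) (`|ST|) => p q r t.
    lra.
  have := le_trans hL (le_trans h hR); rewrite lee_fin.
  lra.
exists zX; split => //.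
apply/eqP; rewrite -subr_eq0 -normr_le0 leNgt; apply/negP => e0.
set e := `|T zX - zX| in e0 key.
pose m' := (Num.truncn ((2%:R * K + 1) / e)).+1.
have hm := key m' isT.
have hm1 : (2%:R * K + 1) / e < m'%:R by exact: truncnS_gt.
have hm2 : 2%:R * K + 1 < m'%:R * e by rewrite -ltr_pdivrMr.
have m1 : 1 <= m'%:R :> R by rewrite ler1n.
rewrite natrM in hm.
have h3 : m'%:R * (2%:R * K + 1) < m'%:R * (m'%:R * e).
  by rewrite ltr_pM2l // (lt_le_trans ltr01 m1).
nra.
Qed.
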